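(* There exists a family $(\mathcal{A}_n)_{n\in\mathbb{N}}$ of (non-deterministic) generalised Büchi automata such that for every $n$, $\mathcal{A}_n$ has $n+1$ states and uses $2$ output colours, and every generalised Büchi automaton recognising $\mathcal{L}(\mathcal{A}_n)$ with the minimal number of states (among generalised Büchi automata recognising $\mathcal{L}(\mathcal{A}_n)$) uses at least $2^n$ output colours.
   Context: An automaton is a tuple $(Q,\Sigma,q_{\mathrm{init}},\Delta,\Gamma,\mathrm{col},W)$ with finite state set, finite input alphabet, initial state, transitions $\Delta\subseteq Q\times\Sigma\times Q$ (arbitrary, possibly non-deterministic), output alphabet $\Gamma$, labelling $\mathrm{col}:\Delta\to\Gamma$, acceptance condition $W\subseteq\Gamma^\omega$. A run on $w=a_1a_2\cdots$ is a sequence $(q_0,a_1,q_1)(q_1,a_2,q_2)\cdots$ of transitions with $q_0=q_{\mathrm{init}}$, accepting if its label sequence is in $W$; $\mathcal{L}(\mathcal{A})$ is the set of words with an accepting run. A generalised Büchi automaton with finite output colour set $C$ has $\Gamma=2^C$ and $W=\{x : \text{every } c\in C \text{ occurs in infinitely many letters of } x\}$; its number of output colours is $|C|$. *)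

(* Defs.v *)
From mathcomp Require Import all_boot.
Set Implicit Arguments. Unset Strict Implicit. Unset Printing Implicit Defensive.

(* A generalised Büchi automaton over the finite input alphabet Sigma.
   - gba_Q      : finite state set, gba_init : initial state
   - gba_delta  : transition relation Δ ⊆ Q × Σ × Q (as a boolean predicate)
   - gba_C      : finite set of output colours (output alphabet Γ = 2^C)
   - gba_col    : labelling of transitions by sets of colours; only its values
                  on transitions in Δ are relevant. *)
Record GBA (Sigma : finType) := {
  gba_Q : finType;
  gba_init : gba_Q;
  gba_delta : gba_Q -> Sigma -> gba_Q -> bool;
  gba_C : finType;
  gba_col : gba_Q -> Sigma -> gba_Q -> {set gba_C}
}.

(* An infinite word a_1 a_2 ... is encoded as w : nat -> Sigma (w i = a_(i+1)). *)
Definition is_run (Sigma : finType) (A : GBA Sigma) (w : nat -> Sigma)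
    (r : nat -> gba_Q A) : Prop :=
  r 0 = gba_init A /\ forall i, gba_delta (r i) (w i) (r i.+1).

Definition gba_accepting_run (Sigma : finType) (A : GBA Sigma) (w : nat -> Sigma)
    (r : nat -> gba_Q A) : Prop :=
  forall c : gba_C A, forall N : nat, exists i, N <= i /\ c \in gba_col (r i) (w i) (r i.+1).

Definition gba_accepts (Sigma : finType) (A : GBA Sigma) (w : nat -> Sigma) : Prop :=
  exists r : nat -> gba_Q A, @is_run Sigma A w r /\ @gba_accepting_run Sigma A w r.

Definition same_language (Sigma : finType) (B A : GBA Sigma) : Prop :=
  forall w, gba_accepts B w <-> gba_accepts A w.

Definition num_states (Sigma : finType) (A : GBA Sigma) : nat := #|gba_Q A|.
Definition num_colours (Sigma : finType) (A : GBA Sigma) : nat := #|gba_C A|.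

Definition state_minimal_for (Sigma : finType) (B A : GBA Sigma) : Prop :=
  same_language B A /\
  forall B' : GBA Sigma, same_language B' A -> num_states B <= num_states B'.

(* Main.v *)
Require Import Defs.
From mathcomp Require Import all_boot.
From Stdlib Require Import Classical ClassicalEpsilon.

Definition Sg (n : nat) : finType := option (option ('I_n * bool)).

Definition inf {T : Type} (w : nat -> T) (x : T) : Prop :=
  forall N, exists i, N <= i /\ w i = x.

Definition Lg {n : nat} (w : nat -> Sg n) : Prop :=
  inf w None \/ exists j, inf w (Some (Some (j, true))) /\ inf w (Some (Some (j, false))).

Definition Adelta {n : nat} (q : option 'I_n) (x : Sg n) (q' : option 'I_n) : bool :=
  match q, q' with
  | None, _ => true
  | Some j, Some j' => j == j'
  | _, _ => false
  end.

Definition Acol {n : nat} (q : option 'I_n) (x : Sg n) (q' : option 'I_n) : {set bool} :=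
  match q, q' with
  | None, None => if x == None then setT else set0
  | Some j, Some j' => if j == j' then
       (if x == Some (Some (j, true)) then [set true]
        else if x == Some (Some (j, false)) then [set false] else set0)
       else set0
  | _, _ => set0
  end.

Definition AA (n : nat) : GBA (Sg n) :=
  {| gba_Q := option 'I_n; gba_init := None; gba_delta := @Adelta n;
     gba_C := bool; gba_col := @Acol n |}.

Definition okg {n : nat} (g : {ffun 'I_n -> bool}) (x : Sg n) : bool :=
  match x with
  | None => true
  | Some None => false
  | Some (Some (i, b)) => g i != b
  end.

Definition BB (n : nat) : GBA (Sg n) :=
  {| gba_Q := unit; gba_init := tt; gba_delta := fun _ _ _ => true;
     gba_C := {ffun 'I_n -> bool}; gba_col := fun _ x _ => [set g | okg g x] |}.

Lemma pigeon (T : eqType) (s : seq T) (w : nat -> T) :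
  (forall N, exists i, N <= i /\ w i \in s) -> exists x, x \in s /\ inf w x.
Proof.
elim: s => [|x s IH] H.
  by have [i [_ ]] := H 0.
have [hx|hx] := classic (inf w x).
  by exists x; rewrite mem_head.
have [N0 HN0] := not_all_ex_not _ _ hx.
have [y [ys iy]] : exists y, y \in s /\ inf w y.
  apply: IH => N.
  have [i [Hi Hw]] := H (maxn N N0).
  exists i; split; first by apply: leq_trans Hi; rewrite leq_maxl.
  move: Hw; rewrite in_cons; case/orP => // /eqP e.
  exfalso; apply: HN0; exists i; split => //.
  by apply: leq_trans Hi; rewrite leq_maxr.
by exists y; rewrite in_cons ys orbT.
Qed.

Lemma A_lang n (w : nat -> Sg n) : @gba_accepts _ (AA n) w <-> Lg w.
Proof.
split.
  move=> [r [[r0 hr] hacc]].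
  have [[k Hk]|Hn] := classic (exists k, r k != None).
    case Ek: (r k) Hk => [j|] // _.
    have Hm : forall m, r (k + m) = Some j.
      elim=> [|m IH]; first by rewrite addn0.
      have := hr (k + m); rewrite IH addnS.
      by case: (r (k + m).+1) => // j' /= /eqP ->.
    have Hge : forall i, k <= i -> r i = Some j.
      by move=> i /subnKC <-.
    right; exists j; split => N.
      have [i [Hi Hc]] := hacc true (maxn N k).
      have ki : k <= i by apply: leq_trans Hi; rewrite leq_maxr.
      exists i; split; first by apply: leq_trans Hi; rewrite leq_maxl.
      move: Hc; rewrite /= Hge // Hge ?(leq_trans ki) // /Acol eqxx.
      case: eqP => // _; case: eqP => // _; by rewrite ?in_set1 ?in_set0.
    have [i [Hi Hc]] := hacc false (maxn N k).
    have ki : k <= i by apply: leq_trans Hi; rewrite leq_maxr.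
    exists i; split; first by apply: leq_trans Hi; rewrite leq_maxl.
    move: Hc; rewrite /= Hge // Hge ?(leq_trans ki) // /Acol eqxx.
    case: eqP => [_|_]; first by rewrite in_set1.
    case: eqP => // _; by rewrite ?in_set1 ?in_set0.
  have Hr : forall k, r k = None.
    move=> k; case E: (r k) => [j|] //; exfalso; apply: Hn; exists k; by rewrite E.
  left => N.
  have [i [Hi Hc]] := hacc true N.
  exists i; split => //.
  move: Hc; rewrite /= !Hr /Acol; case: eqP => //; by rewrite in_set0.
case=> [Hc|[j [Ha Hb]]].
  exists (fun _ => None); split; first by split.
  move=> c N; have [i [Hi Hw]] := Hc N.
  by exists i; split => //=; rewrite /Acol Hw eqxx in_setT.
exists (fun i => if i is 0 then None else Some j); split.
  by split => // -[|i] //=; rewrite eqxx.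
move=> [] N.
  have [i [Hi Hw]] := Ha N.+1.
  case: i Hi Hw => // i Hi Hw.
  exists i.+1; split; first by apply: ltnW.
  by rewrite /= /Acol eqxx Hw eqxx in_set1.
have [i [Hi Hw]] := Hb N.+1.
case: i Hi Hw => // i Hi Hw.
exists i.+1; split; first by apply: ltnW.
by rewrite /= /Acol eqxx Hw eqxx /=; case: eqP => // _; rewrite in_set1.
Qed.

Definition pb (P : Prop) : bool := if excluded_middle_informative P then true else false.

Lemma B_lang n (w : nat -> Sg n) : @gba_accepts _ (BB n) w <-> Lg w.
Proof.
split.
  move=> [r [_ hacc]].
  apply: NNPP => HL.
  pose g : {ffun 'I_n -> bool} := [ffun j => ~~ pb (inf w (Some (Some (j, false))))].
  have [x [xs xi]] : exists x, x \in [seq x <- enum (Sg n) | okg g x] /\ inf w x.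
    apply: pigeon => N.
    have [i [Hi Hc]] := hacc g N.
    exists i; split => //.
    by move: Hc; rewrite /= inE mem_filter mem_enum andbT.
  move: xs; rewrite mem_filter mem_enum andbT.
  case: x xi => [[[i b]|]|] //= xi; last by move=> _; apply: HL; left.
  rewrite /g ffunE /pb; case: excluded_middle_informative => ib; case: b xi => /= xi; rewrite ?eqxx /=  => H.
  all: try by [apply: HL; right; exists i | apply: ib ].
move=> HL; exists (fun _ => tt); split; first by split => //; case: (gba_init _).
move=> g N /=.
case: HL => [Hc|[j [Ha Hb]]].
  by have [i [Hi Hw]] := Hc N; exists i; rewrite inE Hw.
case E: (g j).
  by have [i [Hi Hw]] := Hb N; exists i; rewrite inE Hw /= E.
by have [i [Hi Hw]] := Ha N; exists i; rewrite inE Hw /= E.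
Qed.

Definition per {T : Type} (x0 : T) (s : seq T) (k : nat) : T := nth x0 s (k %% size s).

Lemma per_in (T : eqType) (x0 : T) s k : s != [::] -> per x0 s k \in s.
Proof.
move=> ne; apply: mem_nth; rewrite ltn_pmod //; by case: s ne.
Qed.

Lemma per_inf (T : eqType) (x0 : T) s x : x \in s -> inf (per x0 s) x.
Proof.
move=> xs N; exists (N * size s + index x s); split.
  apply: leq_trans (leq_addr _ _); rewrite leq_pmulr //.
  by case: s xs.
by rewrite /per modnMDl modn_small ?index_mem // nth_index.
Qed.

Lemma inf_in (T : eqType) (x0 : T) s x : s != [::] -> inf (per x0 s) x -> x \in s.
Proof. move=> ne H; have [i [_ <-]] := H 0; exact: per_in. Qed.

Arguments per_in {T} x0 {s k}.
Arguments per_inf {T} x0 {s x}.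
Arguments inf_in {T x0 s x}.

Definition sg {n : nat} (g : {ffun 'I_n -> bool}) : seq (Sg n) :=
  Some None :: [seq Some (Some (i, g i)) | i <- enum 'I_n].

Lemma sg_in n (g : {ffun 'I_n -> bool}) j b : Some (Some (j, b)) \in sg g -> g j = b.
Proof. by rewrite in_cons /= => /mapP [i _ [-> ->]]. Qed.

Arguments sg_in {n g j b}.

Lemma sg_mem n (g : {ffun 'I_n -> bool}) j : Some (Some (j, g j)) \in sg g.
Proof. by rewrite in_cons /=; apply/map_f; rewrite mem_enum. Qed.

Theorem proposition33 :
  exists (Sig : nat -> finType) (A : forall n : nat, GBA (Sig n)),
    forall n : nat,
      num_states (A n) = n.+1 /\
      num_colours (A n) = 2 /\
      (forall B : GBA (Sig n), state_minimal_for B (A n) -> 2 ^ n <= num_colours B).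
Proof.
exists Sg, AA => n; split; first by rewrite /num_states /= card_option card_ord.
split; first by rewrite /num_colours /= card_bool.
move=> B [HBA Hmin].
have HBB : same_language (BB n) (AA n) by move=> w; rewrite A_lang B_lang.
have H1 := Hmin _ HBB.
have single : forall q : gba_Q B, q = gba_init B.
  move: H1; rewrite /num_states /= card_unit => /card_le1_eqP H q.
  by apply: H; rewrite inE.
pose q0 := gba_init B.
pose E x := gba_delta q0 x q0.
pose K x := gba_col q0 x q0.
have accB : forall w, gba_accepts B w <-> Lg w by move=> w; rewrite HBA A_lang.
have char1 : forall w, gba_accepts B w ->
    (forall i, E (w i)) /\ forall c N, exists i, N <= i /\ c \in K (w i).
  move=> w [r [[r0 hr] hacc]]; split.
    by move=> i; have := hr i; rewrite (single (r i)) (single (r i.+1)).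
  by move=> c N; have [i [Hi Hc]] := hacc c N; exists i; move: Hc;
     rewrite (single (r i)) (single (r i.+1)).
have char2 : forall w, (forall i, E (w i)) ->
    (forall c N, exists i, N <= i /\ c \in K (w i)) -> gba_accepts B w.
  by move=> w HE HK; exists (fun _ => q0); split.
have en : forall g x, x \in None :: sg g -> E x.
  move=> g x xs.
  have [] : gba_accepts B (per None (None :: sg g)).
    by apply/accB; left; apply: per_inf; rewrite mem_head.
  move=> r Hr; have [HE _] := char1 _ (ex_intro _ r Hr).
  by have [i [_ <-]] := per_inf None xs 0.
have ex : forall g, exists c, all (fun x => c \notin K x) (sg g).
  move=> g; apply: NNPP => Hn.
  have : gba_accepts B (per None (sg g)).
    apply: char2.
      by move=> i; apply: (en g); rewrite in_cons per_in ?orbT.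
    move=> c N.
    have : has (fun x => c \in K x) (sg g).
      apply/hasP; apply: NNPP => H2; apply: Hn; exists c; apply/allP => x xs.
      by apply/negP => xc; apply: H2; exists x.
    move/hasP => [x xs xc].
    by have [i [Hi Hx]] := per_inf None xs N; exists i; rewrite Hx.
  move/accB; case=> [/inf_in H|[j [/inf_in Ha /inf_in Hb]]].
    by move: (H isT); rewrite in_cons /= => /mapP [].
  by have := sg_in (Ha isT); rewrite (sg_in (Hb isT)).
pose f g := xchoose (ex g).
have finj : injective f.
  move=> g h Efg; apply/ffunP => j; apply: NNPP => Hne.
  have HL : Lg (per None (sg g ++ sg h)).
    right; exists j; split; apply: per_inf; rewrite mem_cat.
      case E1: (g j); first by rewrite -E1 sg_mem.
      by case E2: (h j) Hne; rewrite E1 // => _; rewrite -E2 sg_mem orbT.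
    case E1: (g j); last by rewrite -E1 sg_mem.
    by case E2: (h j) Hne; rewrite E1 // => _; rewrite -E2 sg_mem orbT.
  have [_ HK] := char1 _ (proj2 (accB _) HL).
  have [i [_ Hc]] := HK (f g) 0.
  have : per None (sg g ++ sg h) i \in sg g ++ sg h by apply: per_in.
  rewrite mem_cat => /orP [] xs.
    by have := xchooseP (ex g); move/allP => /(_ _ xs); rewrite Hc.
  by have := xchooseP (ex h); move/allP => /(_ _ xs); rewrite -/(f h) -Efg Hc.
rewrite /num_colours.
have := leq_card f finj.
by rewrite card_ffun card_bool card_ord.
Qed.
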